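(* Let $N\ge 3$ and integers $0\le j\le i<N-1$. Let $c$ be a class, and let $A\subseteq B$ be sets of classes with $c\in A$, $|A|=N-i$, $|B|=N-j$. Let sample $s_1$ have class uniformly distributed on $A$ and sample $s_2$ have class uniformly distributed on $B$, independently. In a $3$IC query of $s_1,s_2$ with the representative of class $c$, define the number of settled samples to be $2$ if both $s_1$ and $s_2$ have class $c$; $1$ if exactly one of them has class $c$, or if neither has class $c$ but $s_1$ and $s_2$ have the same class; and $0$ otherwise. Then the expected number of settled samples is $$SL=\frac{2(N-i)+(N-j-1)}{(N-i)(N-j)}.$$
   Context: This models one query of a greedy round-robin triplet ($3$IC) labeling algorithm on a dataset with $N$ equally likely classes: the length of a sample is the number of class representatives it has already been (unsuccessfully) compared with, so a sample of length $i$ is uniformly distributed over the $N-i$ classes not yet excluded; $s_1$ has length $i$, $s_2$ has length $j$, and the classes excluded for $s_2$ are among those excluded for $s_1$. A $3$IC query presents three items to an error-free oracle that reports which of them share a class; when $s_1,s_2$ match each other but not the representative, one of them is merged into the other and counted as settled. *)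

(* Defs.v *)
From mathcomp Require Import all_boot all_order all_algebra.
Set Implicit Arguments. Unset Strict Implicit. Unset Printing Implicit Defensive.
Import Order.TTheory GRing.Theory Num.Theory.

Definition settled (N : nat) (c a b : 'I_N) : nat :=
  if (a == c) && (b == c) then 2
  else if (a == c) || (b == c) then 1
  else if a == b then 1
  else 0.

(* Expected number of settled samples when the class of s1 is uniform on A and
   the class of s2 is uniform on B, independently (product of the two uniform
   distributions). *)
Definition expected_settled (R : realFieldType) (N : nat) (c : 'I_N)
    (A B : {set 'I_N}) : R :=
  \sum_(a in A) \sum_(b in B)
     ((settled c a b)%:R / (#|A|%:R * #|B|%:R)).

(* Main.v *)
Require Import Defs.
From mathcomp Require Import all_boot all_order all_algebra.
From mathcomp Require Import zify.
Import Order.TTheory GRing.Theory Num.Theory.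
Local Open Scope ring_scope.

Lemma settledE N (c a b : 'I_N) :
  settled c a b = ((a == c) + (b == c) + ((a != c) && (a == b)))%N.
Proof.
rewrite /settled; case: (eqVneq a b) => [<-|ab].
  by case: (a == c).
case: (eqVneq a c) => [ac|ac]; case: (eqVneq b c) => [bc|bc] //=.
Qed.

Lemma sum_eq1 N (B : {set 'I_N}) c : c \in B -> (\sum_(b in B) (b == c) = 1)%N.
Proof.
move=> cB; rewrite (bigD1 c) //= eqxx big1 ?addn0 // => b /andP[_ /negbTE->] //.
Qed.

Arguments sum_eq1 {N B c}.

Lemma sum_nat N (c : 'I_N) (A B : {set 'I_N}) :
  c \in A -> A \subset B ->
  (\sum_(a in A) \sum_(b in B) settled c a b = 2 * #|A| + #|B| - 1)%N.
Proof.
move=> cA AB.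
under eq_bigr => a aA.
  under eq_bigr => b _ do rewrite settledE.
  rewrite big_split big_split /= sum_nat_const (sum_eq1 (subsetP AB c cA)).
  have -> : (\sum_(i in B) ((a != c) && (a == i)) = (a != c))%N.
    case: (eqVneq a c) => [_|ac] /=.
      by rewrite big1.
    under eq_bigr => b _ do rewrite /= eq_sym.
    by rewrite sum_eq1 // (subsetP AB).
  over.
rewrite /= big_split big_split /=.
rewrite -big_distrr /= (sum_eq1 cA) sum1_card muln1.
have H : (\sum_(i in A) (i == c) + \sum_(i in A) (i != c) = #|A|)%N.
  rewrite -big_split /= -sum1_card; apply: eq_bigr => a _; by case: eqP.
rewrite (sum_eq1 cA) in H.
have cA1 : (0 < #|A|)%N by apply/card_gt0P; exists c.
set S := (X in (_ + X = _)%N); have H2 : (1 + S = #|A|)%N := H. clearbody S. clear H. rewrite -H2. move: #|B| => b. lia.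
Qed.

Theorem lemma2 (R : realFieldType) (N i j : nat) (c : 'I_N)
    (A B : {set 'I_N}) :
  (3 <= N)%N -> (j <= i)%N -> (i < N - 1)%N ->
  c \in A -> A \subset B -> #|A| = (N - i)%N -> #|B| = (N - j)%N ->
  expected_settled R c A B =
    ((2 * (N - i) + (N - j - 1))%N)%:R / (((N - i) * (N - j))%N)%:R.
Proof.
move=> HN ji iN cA AB hA hB.
rewrite /expected_settled.
under eq_bigr => a _ do rewrite -mulr_suml.
rewrite -mulr_suml.
under eq_bigr => a _ do rewrite -natr_sum.
rewrite -natr_sum sum_nat // hA hB -natrM.
congr (_ / _); congr (_%:R); lia.
Qed.
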